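(* Let $a(j,x)\ge0$, $j=1,\dots,N$, be densities with respect to $\mu$, $b\ge0$ a function, and $\beta_j=\int a(j,x)b(x)\,d\mu(x)$. Let $(\rho(j,\cdot))_{j}$ be proposal densities and $M_j\ge\sup_x a(j,x)b(x)/\rho(j,x)$ bounds, and let $(\tau_j)$ be a probability distribution on $\{1,\dots,N\}$ with all $\tau_j>0$. Consider the accept–reject scheme which draws $J\sim(\tau_j)$, then $X\sim\rho(J,\cdot)$, and accepts $(J,X)=(j,x)$ with probability $\pi(j,x)=\frac{a(j,x)b(x)}{M\tau_j\rho(j,x)}$, where $M=\max_j M_j/\tau_j$. Then the average acceptance probability is at most $\sum_j\beta_j/\sum_jM_j$, with equality if and only if $\tau_j\propto M_j$.
   Context: The scheme targets the density $f^N(x)\propto b(x)\sum_{j=1}^Na(j,x)$; the average acceptance probability is $\sum_j\int\pi(j,x)\tau_j\rho(j,x)\,d\mu(x)$. *)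

(* Defs.v *)
From HB Require Import structures.
From mathcomp Require Import all_boot all_order all_algebra.
From mathcomp Require Import all_classical all_reals all_analysis.
Set Implicit Arguments. Unset Strict Implicit. Unset Printing Implicit Defensive.
Import Order.TTheory GRing.Theory Num.Theory.
Local Open Scope ring_scope.


Definition is_density (d : measure_display) (T : measurableType d) (R : realType)
  (mu : {measure set T -> \bar R}) (f : T -> R) : Prop :=
  [/\ measurable_fun setT f, (forall x, (0 <= f x)%R)
    & (\int[mu]_x (f x)%:E = 1)%E].

Definition beta (d : measure_display) (T : measurableType d) (R : realType)
  (mu : {measure set T -> \bar R}) (N : nat) (a : 'I_N -> T -> R) (b : T -> R)
  (j : 'I_N) : \bar R :=
  \int[mu]_x (a j x * b x)%:E.

(* M = max_j M_j / tau_j  (all M_j / tau_j are >= 0 under the hypotheses) *)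
Definition Mmax (R : realType) (N : nat) (Mb tau : 'I_N -> R) : R :=
  \big[Num.max/0%R]_(j < N) (Mb j / tau j).

(* acceptance probability pi(j,x) = a(j,x) b(x) / (M tau_j rho(j,x))
   (MathComp convention: division by 0 yields 0) *)
Definition accept_prob (R : realType) (T : Type) (N : nat)
  (a rho : 'I_N -> T -> R) (b : T -> R) (Mb tau : 'I_N -> R)
  (j : 'I_N) (x : T) : R :=
  (a j x * b x / (Mmax Mb tau * tau j * rho j x))%R.

Definition avg_accept (d : measure_display) (T : measurableType d) (R : realType)
  (mu : {measure set T -> \bar R}) (N : nat)
  (a rho : 'I_N -> T -> R) (b : T -> R) (Mb tau : 'I_N -> R) : \bar R :=
  (\sum_(j < N) \int[mu]_x (accept_prob a rho b Mb tau j x * tau j * rho j x)%:E)%E.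

(* Main.v *)
Require Import Defs.
From HB Require Import structures.
From mathcomp Require Import all_boot all_order all_algebra.
From mathcomp Require Import all_classical all_reals all_analysis.
From mathcomp Require Import measurable_realfun.
From mathcomp Require Import ring lra.
Set Implicit Arguments. Unset Strict Implicit. Unset Printing Implicit Defensive.
Import Order.TTheory GRing.Theory Num.Theory.
Local Open Scope ring_scope.
Lemma Mmax_ge (R : realType) N (m t : 'I_N -> R) j : m j / t j <= Mmax m t.
Proof. rewrite /Mmax; exact: (le_bigmax 0 (fun j => m j / t j) j). Qed.

Lemma Mmax_sum (R : realType) N (m t : 'I_N -> R) :
  (forall j, 0 < t j) -> \sum_j t j = 1 ->
  \sum_j m j <= Mmax m t.
Proof.
move=> t0 t1.
have -> : Mmax m t = \sum_j Mmax m t * t j by rewrite -mulr_sumr t1 mulr1.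
apply: ler_sum => j _.
have := Mmax_ge m t j; rewrite ler_pdivrMr //.
Qed.

Lemma Mmax_eq (R : realType) N (m t : 'I_N -> R) :
  (forall j, 0 < t j) -> \sum_j t j = 1 -> 0 < \sum_j m j ->
  (Mmax m t = \sum_j m j <-> exists c : R, forall j, t j = c * m j).
Proof.
move=> t0 t1 s0; split.
- move=> E.
  have Hge : forall j, true -> 0 <= Mmax m t * t j - m j.
    move=> j _; rewrite subr_ge0; have := Mmax_ge m t j; rewrite ler_pdivrMr //.
  have H : \sum_j (Mmax m t * t j - m j) = 0.
    by rewrite sumrB -mulr_sumr t1 mulr1 E subrr.
  have Mpos : 0 < Mmax m t by rewrite E.
  exists (Mmax m t)^-1 => j.
  have Hj : Mmax m t * t j - m j = 0 by exact: (psumr_eq0P Hge H).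
  move/eqP: Hj; rewrite subr_eq0 => /eqP <-.
  by rewrite mulrA mulVf ?mul1r // gt_eqF.
- case=> c Hc.
  have Hc1 : c * \sum_j m j = 1 by rewrite mulr_sumr -t1; apply: eq_bigr => j _; rewrite Hc.
  have c0 : c != 0 by apply/eqP => c0; move: Hc1; rewrite c0 mul0r => /eqP; rewrite eq_sym oner_eq0.
  have cE : c^-1 = \sum_j m j.
    by apply: (mulfI c0); rewrite divff // Hc1.
  have term : forall j, m j / t j = \sum_j m j.
    move=> j; have tj := t0 j; rewrite Hc in tj *.
    have mj : m j != 0 by apply/eqP => mj; move: tj; rewrite mj mulr0 ltxx.
    by rewrite invfM mulrCA divff // mulr1.
  apply/le_anti/andP; split; last exact: Mmax_sum.
  rewrite /Mmax; apply: bigmax_le; first exact: ltW.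
  by move=> j _; rewrite term.
Qed.

Local Open Scope ereal_scope.

Theorem lemma1 (d : measure_display) (T : measurableType d) (R : realType)
  (mu : {measure set T -> \bar R}) (N : nat)
  (a rho : 'I_N -> T -> R) (b : T -> R) (Mb tau : 'I_N -> R) :
  (0 < N)%N ->
  (forall j, is_density mu (a j)) ->
  measurable_fun setT b -> (forall x, (0 <= b x)%R) ->
  (forall j, is_density mu (rho j)) ->
  (forall j x, (a j x * b x <= Mb j * rho j x)%R) ->
  (forall j, (0 < tau j)%R) -> (\sum_(j < N) tau j)%R = 1%R ->
  0 < \sum_(j < N) beta mu a b j ->
  avg_accept mu a rho b Mb tau
    <= (\sum_(j < N) beta mu a b j) * ((\sum_(j < N) Mb j)^-1)%:E
  /\
  (avg_accept mu a rho b Mb tau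
     = (\sum_(j < N) beta mu a b j) * ((\sum_(j < N) Mb j)^-1)%:E
   <-> exists c : R, forall j, tau j = (c * Mb j)%R).
Proof.
move=> N0 ha mb b0 hr hab t0 t1 Sb0.
have ab0 : forall j x, (0 <= a j x * b x)%R.
  by move=> j x; apply: mulr_ge0 => //; case: (ha j).
have mab : forall j, measurable_fun setT (EFin \o (fun x => a j x * b x)%R).
  move=> j; apply/measurable_realfun.measurable_EFinP; apply: measurable_realfun.measurable_funM => //; by case: (ha j).
have Mb0 : forall j, (0 <= Mb j)%R.
  move=> j; rewrite leNgt; apply/negP => Mn.
  case: (hr j) => _ r0 r1.
  have rz : forall x, rho j x = 0%R.
    move=> x; apply/eqP; rewrite eq_le r0 andbT.
    have := le_trans (ab0 j x) (hab j x).
    move=> h; nra.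
  move: r1; rewrite (eq_integral (fun x => (cst 0%R x)%:E)); last by move=> x _; rewrite rz.
  by rewrite integral0 => /eqP; rewrite eq_sym onee_eq0.
have bb : forall j, 0 <= beta mu a b j <= (Mb j)%:E.
  move=> j; apply/andP; split; first by apply: integral_ge0 => x _; rewrite lee_fin.
  case: (hr j) => mr r0 r1.
  have e1 : \int[mu]_x ((Mb j)%:E * (rho j x)%:E) = (Mb j)%:E.
    rewrite ge0_integralZl_EFin //.
    - by rewrite r1 mule1.
    - by move=> x _; rewrite lee_fin.
    - exact/measurable_realfun.measurable_EFinP.
  rewrite -e1 /beta; apply: ge0_le_integral => //.
  - by move=> x _; rewrite lee_fin.
  - exact: mab.
  - apply/measurable_realfun.measurable_EFinP; apply: measurable_realfun.measurable_funM => //.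
  - by move=> x _; rewrite -EFinM lee_fin.
have hB : forall j, beta mu a b j = (fine (beta mu a b j))%:E.
  move=> j; have /andP[h1 h2] := bb j.
  by rewrite fineK // ge0_fin_numE // (le_lt_trans h2) // ltry.
set B := fun j => fine (beta mu a b j).
have SB : \sum_(j < N) beta mu a b j = (\sum_(j < N) B j)%:E.
  by rewrite -sumEFin; apply: eq_bigr => j _; exact: hB.
have BM : forall j, (B j <= Mb j)%R.
  by move=> j; have /andP[_ h2] := bb j; move: h2; rewrite hB lee_fin.
have sB0 : (0 < \sum_(j < N) B j)%R by rewrite -lte_fin -SB.
have sBm : (\sum_(j < N) B j <= \sum_(j < N) Mb j)%R by apply: ler_sum => j _.
have sm0 : (0 < \sum_(j < N) Mb j)%R by exact: lt_le_trans sB0 sBm.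
have Msm := Mmax_sum Mb t0 t1.
have M0 : (0 < Mmax Mb tau)%R by exact: lt_le_trans sm0 Msm.
have Av : avg_accept mu a rho b Mb tau = ((Mmax Mb tau)^-1 * \sum_(j < N) B j)%:E.
  rewrite /avg_accept mulr_sumr -sumEFin; apply: eq_bigr => j _.
  rewrite (eq_integral (fun x => ((Mmax Mb tau)^-1)%:E * (a j x * b x)%:E)); last first.
    move=> x _; rewrite -EFinM; congr EFin; rewrite /accept_prob.
    case: (eqVneq (rho j x) 0%R) => [r0|rn0].
      have : (a j x * b x = 0)%R.
        by apply/eqP; rewrite eq_le ab0 andbT; have := hab j x; rewrite r0 mulr0.
      by move=> ->; rewrite r0 !mulr0.
    have tn0 : tau j != 0%R by rewrite gt_eqF.
    have Mn0 : Mmax Mb tau != 0%R by rewrite gt_eqF.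
    by field; rewrite Mn0 tn0 rn0.
  rewrite ge0_integralZl_EFin //.
  - by rewrite EFinM -hB.
  - by move=> x _; rewrite lee_fin.
  - exact: mab.
  - by rewrite invr_ge0 ltW.
rewrite Av SB -EFinM; split.
  rewrite lee_fin mulrC ler_pM2l // lef_pV2 // posrE //.
split.
  case=> E; apply/Mmax_eq => //.
  have : ((Mmax Mb tau)^-1 = (\sum_(j < N) Mb j)^-1)%R.
    by apply: (mulIf (lt0r_neq0 sB0)); rewrite E mulrC.
  exact: invr_inj.
move/(Mmax_eq t0 t1 sm0) => ->.
by rewrite mulrC.
Qed.
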